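(* Let $\kappa$ be an uncountable cardinal with $\kappa=\kappa^{<\kappa}$. Then there is a sequence $\langle A_\gamma\subseteq{}^\kappa\kappa : \gamma<2^\kappa\rangle$ of pairwise disjoint sets, each of which is the image of ${}^\kappa\kappa$ under a continuous injective function ${}^\kappa\kappa\to{}^\kappa\kappa$, such that for all $\gamma<\delta<2^\kappa$ the sets $A_\gamma$ and $A_\delta$ cannot be separated by a set with the $\kappa$-Baire property, i.e. there is no $X\subseteq{}^\kappa\kappa$ with the $\kappa$-Baire property such that $A_\gamma\subseteq X\subseteq{}^\kappa\kappa\setminus A_\delta$.
   Context: ${}^\kappa\kappa$ is the set of functions $\kappa\to\kappa$, with the topology whose basic open sets are $N_s=\{x\in{}^\kappa\kappa : s\subseteq x\}$ for $s$ a function from some ordinal $\alpha<\kappa$ to $\kappa$. A subset $A$ of ${}^\kappa\kappa$ has the $\kappa$-Baire property if there is an open set $U\subseteq{}^\kappa\kappa$ and a sequence $\langle N_\alpha:\alpha<\kappa\rangle$ of nowhere dense subsets of ${}^\kappa\kappa$ such that the symmetric difference of $A$ and $U$ is contained in $\bigcup_{\alpha<\kappa}N_\alpha$. *)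

(* Defs.v *)
(* The cardinal kappa is modelled as a type K carrying a strict
   well-order [lt] of order type kappa (elements of K = ordinals < kappa). *)
From Stdlib Require Import Relations Wellfounded.

Definition set (T : Type) := T -> Prop.

Definition strict_well_order {K : Type} (lt : K -> K -> Prop) : Prop :=
  (forall x, ~ lt x x) /\
  (forall x y z, lt x y -> lt y z -> lt x z) /\
  (forall x y, lt x y \/ x = y \/ lt y x) /\
  well_founded lt.

(* the order type is a cardinal: no proper initial segment {y | y < a}
   has the same size as K (equivalently, K does not inject into it) *)
Definition is_cardinal_order {K : Type} (lt : K -> K -> Prop) : Prop :=
  forall a : K, ~ exists f : K -> K,
      (forall x y, f x = f y -> x = y) /\ (forall x, lt (f x) a).

Definition uncountable (K : Type) : Prop :=
  ~ exists f : K -> nat, forall x y, f x = f y -> x = y.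

(* kappa^{<kappa} <= kappa (hence = kappa): the set of all functions
   s : alpha -> kappa with alpha < kappa injects into kappa.  Such an s is
   represented by a pair (a, t) with t : K -> K, two pairs representing the
   same s iff a = a' and t, t' agree below a. *)
Definition kappa_lt_kappa_le_kappa {K : Type} (lt : K -> K -> Prop) : Prop :=
  exists phi : K -> (K -> K) -> K,
    forall a t a' t', phi a t = phi a' t' ->
      a = a' /\ (forall y, lt y a -> t y = t' y).

(* basic open set N_s for s = t restricted to {y | y < a} *)
Definition basic_open {K : Type} (lt : K -> K -> Prop) (a : K) (t : K -> K)
  : set (K -> K) :=
  fun x => forall y, lt y a -> x y = t y.

Definition is_open {K : Type} (lt : K -> K -> Prop) (U : set (K -> K)) : Prop :=
  forall x, U x -> exists a t, basic_open lt a t x /\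
      (forall z, basic_open lt a t z -> U z).

Definition closure {K : Type} (lt : K -> K -> Prop) (N : set (K -> K))
  : set (K -> K) :=
  fun x => forall U, is_open lt U -> U x -> exists z, U z /\ N z.

Definition nowhere_dense {K : Type} (lt : K -> K -> Prop) (N : set (K -> K))
  : Prop :=
  forall U, is_open lt U -> (forall z, U z -> closure lt N z) ->
    forall z, ~ U z.

Definition kappa_Baire {K : Type} (lt : K -> K -> Prop) (A : set (K -> K))
  : Prop :=
  exists (U : set (K -> K)) (N : K -> set (K -> K)),
    is_open lt U /\ (forall a, nowhere_dense lt (N a)) /\
    (forall x, ((A x /\ ~ U x) \/ (U x /\ ~ A x)) -> exists a, N a x).

Definition continuous {K : Type} (lt : K -> K -> Prop)
  (f : (K -> K) -> (K -> K)) : Prop :=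
  forall V, is_open lt V -> is_open lt (fun x => V (f x)).

(* Main.v *)
Require Import Defs.
From Stdlib Require Import Classical ClassicalEpsilon FunctionalExtensionality Arith Lia.

Section Main.
Variable K : Type.
Variable lt : K -> K -> Prop.
Hypothesis Hwo : strict_well_order lt.
Hypothesis Hcard : is_cardinal_order lt.
Hypothesis Hunc : uncountable K.
Variable phi : K -> (K -> K) -> K.
Hypothesis Hphi : forall a t a' t', phi a t = phi a' t' ->
      a = a' /\ (forall y, lt y a -> t y = t' y).

Definition dec (P : Prop) : {P} + {~ P} := excluded_middle_informative P.
Definition cid {A : Type} {P : A -> Prop} (H : exists x, P x) : {x | P x} := constructive_indefinite_description P H.

Lemma lt_irr : forall x, ~ lt x x. Proof. apply Hwo. Qed.
Lemma lt_trans : forall x y z, lt x y -> lt y z -> lt x z. Proof. apply Hwo. Qed.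
Lemma lt_tri : forall x y, lt x y \/ x = y \/ lt y x. Proof. apply Hwo. Qed.
Lemma lt_wf : well_founded lt. Proof. apply Hwo. Qed.

Definition le a b := lt a b \/ a = b.

Lemma le_lt_trans : forall x y z, le x y -> lt y z -> lt x z.
Proof. intros x y z [H|H] H2; [eapply lt_trans; eauto | subst; auto]. Qed.
Lemma lt_le_trans : forall x y z, lt x y -> le y z -> lt x z.
Proof. intros x y z H [H2|H2]; [eapply lt_trans; eauto | subst; auto]. Qed.
Lemma lt_asym : forall x y, lt x y -> ~ lt y x.
Proof. intros x y H H2. apply (lt_irr x). eapply lt_trans; eauto. Qed.
Lemma not_lt_le : forall x y, ~ lt x y -> le y x.
Proof. intros x y H. destruct (lt_tri x y) as [?|[?|?]]; [contradiction|right; auto|left; auto]. Qed.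
Lemma le_not_lt : forall x y, le x y -> ~ lt y x.
Proof. intros x y [H|H] H2; [apply (lt_asym _ _ H H2)| subst; apply (lt_irr _ H2)]. Qed.
Lemma le_antisym : forall x y, le x y -> le y x -> x = y.
Proof. intros x y [H|H] H2; auto. exfalso; apply (le_not_lt _ _ H2 H). Qed.

Lemma least_ex (P : K -> Prop) : (exists x, P x) -> exists x, P x /\ forall y, P y -> ~ lt y x.
Proof.
  intros [x Hx]. revert x Hx.
  refine (well_founded_ind lt_wf _ _).
  intros x IH Hx.
  destruct (classic (exists y, P y /\ lt y x)) as [[y [Py Hy]]|N].
  - exact (IH y Hy Py).
  - exists x; split; auto. intros y Py Hy; apply N; eauto.
Qed.

Lemma min_ex : exists m, forall y, ~ lt y m.
Proof.
  destruct (classic (exists k : K, True)) as [[k _]|N].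
  - destruct (least_ex (fun _ => True) (ex_intro _ k I)) as [m [_ Hm]].
    exists m; intros y; apply Hm; auto.
  - exfalso. apply Hunc. exists (fun _ => 0). intros x. exfalso; apply N; eauto.
Qed.

Definition m0 : K := proj1_sig (cid min_ex).
Lemma m0_min : forall y, ~ lt y m0.
Proof. exact (proj2_sig (cid min_ex)). Qed.
Lemma le_m0 : forall y, le m0 y.
Proof. intros y. apply not_lt_le. apply m0_min. Qed.

Lemma three_vals : forall p q : K, exists w, w <> p /\ w <> q.
Proof.
  intros p q. apply NNPP; intro N.
  apply Hunc. exists (fun w => if dec (w = p) then 0 else 1).
  intros x y. destruct (dec (x = p)), (dec (y = p)); try discriminate; intros _.
  - congruence.
  - assert (x = q) by (apply NNPP; intro; apply N; eauto).
    assert (y = q) by (apply NNPP; intro; apply N; eauto). congruence.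
Qed.

Definition dcode (l v : K) : K -> K :=
  match dec (exists t, phi l t = v) with
  | left H => proj1_sig (cid H)
  | right _ => fun _ => m0
  end.

Lemma dcode_spec : forall l t y, lt y l -> dcode l (phi l t) y = t y.
Proof.
  intros l t y Hy. unfold dcode. destruct (dec _) as [H|H].
  - destruct (cid H) as [t' Ht']. simpl. apply Hphi in Ht'. apply Ht'; auto.
  - exfalso; apply H; eauto.
Qed.

Lemma no_max : forall d, exists g, lt d g.
Proof.
  intro d. apply NNPP; intro Hn.
  assert (Hle : forall g, le g d).
  { intro g. apply not_lt_le. intro H; apply Hn; eauto. }
  destruct (classic (exists j, lt j d)) as [[j0 Hj0]|Hno].
  - assert (Hw : forall j, exists w, w <> dcode d j j /\ w <> dcode d d j)
      by (intro; apply three_vals).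
    pose (t := fun j => proj1_sig (cid (Hw j))).
    assert (Ht : forall j, t j <> dcode d j j /\ t j <> dcode d d j)
      by (intro j; exact (proj2_sig (cid (Hw j)))).
    destruct (Hle (phi d t)) as [Hlt|Heq].
    + apply (proj1 (Ht (phi d t))). symmetry. apply dcode_spec; auto.
    + apply (proj2 (Ht j0)). transitivity (dcode d (phi d t) j0).
      * symmetry; apply dcode_spec; auto.
      * rewrite Heq; reflexivity.
  - apply Hunc. exists (fun _ => 0). intros x y _.
    assert (forall g, g = d).
    { intro g. destruct (Hle g) as [H|H]; auto. exfalso; apply Hno; eauto. }
    rewrite (H x), (H y); auto.
Qed.

Definition succ (d : K) : K := proj1_sig (cid (least_ex (fun g => lt d g) (no_max d))).
Lemma succ_gt : forall d, lt d (succ d).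
Proof. intro d. exact (proj1 (proj2_sig (cid (least_ex (fun g => lt d g) (no_max d))))). Qed.
Lemma succ_min : forall d g, lt d g -> le (succ d) g.
Proof.
  intros d g H. apply not_lt_le.
  exact (proj2 (proj2_sig (cid (least_ex (fun g => lt d g) (no_max d)))) g H).
Qed.

Lemma reg : forall (l : K) (h : K -> K), exists b, forall j, lt j l -> le (h j) b.
Proof.
  intros l h. apply NNPP; intro Hn.
  assert (H : forall b, exists j, lt j l /\ lt b (h j)).
  { intro b. apply NNPP; intro H2. apply Hn. exists b. intros j Hj.
    apply not_lt_le. intro H3. apply H2; eauto. }
  assert (Hw : forall j, exists w, forall v, lt v (h j) -> dcode l v j <> w).
  { intro j. apply NNPP; intro Hn2.
    assert (Hs : forall w, exists v, lt v (h j) /\ dcode l v j = w).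
    { intro w. apply NNPP; intro H3. apply Hn2. exists w. intros v Hv Heq. apply H3; eauto. }
    apply (Hcard (h j)). exists (fun w => proj1_sig (cid (Hs w))). split.
    - intros x y Hxy.
      rewrite <- (proj2 (proj2_sig (cid (Hs x)))), <- (proj2 (proj2_sig (cid (Hs y)))).
      rewrite Hxy; reflexivity.
    - intro x. exact (proj1 (proj2_sig (cid (Hs x)))). }
  pose (t := fun j => proj1_sig (cid (Hw j))).
  destruct (H (phi l t)) as [j [Hj Hv]].
  apply (proj2_sig (cid (Hw j)) (phi l t) Hv).
  apply dcode_spec; auto.
Qed.

Fixpoint e (n : nat) : K := match n with 0 => m0 | S n => succ (e n) end.

Lemma e_lt : forall n m, n < m -> lt (e n) (e m).
Proof.
  intros n m H. induction H.
  - apply succ_gt.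
  - eapply lt_trans; eauto. apply succ_gt.
Qed.

Lemma e_inj : forall n m, e n = e m -> n = m.
Proof.
  intros n m H. destruct (lt_eq_lt_dec n m) as [[H1|H1]|H1]; auto.
  - apply e_lt in H1. rewrite H in H1. exfalso; apply (lt_irr _ H1).
  - apply e_lt in H1. rewrite H in H1. exfalso; apply (lt_irr _ H1).
Qed.

Lemma e_cover : forall n b, le b (e n) -> exists m, b = e m.
Proof.
  induction n; intros b Hb.
  - exists 0. simpl in *. destruct Hb as [Hb|Hb]; auto. exfalso; apply (m0_min _ Hb).
  - destruct (classic (lt (e n) b)) as [H|H].
    + exists (S n). apply le_antisym; auto. apply succ_min; auto.
    + apply IHn. apply not_lt_le; auto.
Qed.

Lemma omega_ex : exists w, forall n, lt (e n) w.
Proof.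
  apply NNPP; intro Hn.
  assert (Hall : forall b, exists m, b = e m).
  { intro b. assert (exists n, ~ lt (e n) b).
    { apply NNPP; intro H2. apply Hn. exists b. intro n. apply NNPP; intro; apply H2; eauto. }
    destruct H as [n Hnb]. apply (e_cover n). apply not_lt_le; auto. }
  apply Hunc. exists (fun b => proj1_sig (cid (Hall b))). intros x y Hxy.
  rewrite (proj2_sig (cid (Hall x))), (proj2_sig (cid (Hall y))), Hxy. reflexivity.
Qed.

Lemma omega_bound : forall s : nat -> K, exists b, forall n, le (s n) b.
Proof.
  intro s.
  destruct (least_ex _ omega_ex) as [w [Hw Hwmin]].
  pose (idx := fun g => match dec (exists n, g = e n) with
                        | left H => proj1_sig (cid H) | right _ => 0 end).
  destruct (reg w (fun g => s (idx g))) as [b Hb].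
  exists b. intro n. specialize (Hb (e n) (Hw n)). simpl in Hb.
  unfold idx in Hb. destruct (dec _) as [H|H].
  - destruct (cid H) as [m Hm]. simpl in Hb. apply e_inj in Hm. subst; auto.
  - exfalso; apply H; eauto.
Qed.

Lemma lub_ex (P : K -> Prop) : (exists b, forall x, P x -> le x b) ->
  exists s, (forall x, P x -> le x s) /\ (forall b, (forall x, P x -> le x b) -> le s b).
Proof.
  intro H. destruct (least_ex _ H) as [s [Hs Hmin]].
  exists s; split; auto. intros b Hb. apply not_lt_le. intro Hlt.
  exact (Hmin b Hb Hlt).
Qed.

Definition closedS (C : K -> Prop) := forall a, (exists c, C c /\ lt c a) ->
    (forall b, lt b a -> exists c, C c /\ lt b c /\ lt c a) -> C a.
Definition unbS (C : K -> Prop) := forall xi, exists g, lt xi g /\ C g.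

Lemma club_inter : forall C C', closedS C -> unbS C -> closedS C' -> unbS C' ->
  forall xi, exists g, lt xi g /\ C g /\ C' g.
Proof.
  intros C C' Hc Hu Hc' Hu' xi.
  pose (nC := fun b => proj1_sig (cid (Hu b))).
  pose (nC' := fun b => proj1_sig (cid (Hu' b))).
  assert (HnC : forall b, lt b (nC b) /\ C (nC b)) by (intro b; exact (proj2_sig (cid (Hu b)))).
  assert (HnC' : forall b, lt b (nC' b) /\ C' (nC' b)) by (intro b; exact (proj2_sig (cid (Hu' b)))).
  pose (p := fix p n := match n with 0 => nC xi | S n => nC (nC' (p n)) end).
  pose (q := fun n => nC' (p n)).
  assert (Hp : forall n, C (p n)) by (intros [|n]; apply HnC).
  assert (Hq : forall n, C' (q n)) by (intros n; apply HnC').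
  assert (Hpq : forall n, lt (p n) (q n)) by (intros n; apply HnC').
  assert (Hqp : forall n, lt (q n) (p (S n))) by (intros n; apply HnC).
  assert (Hpp : forall n, lt (p n) (p (S n))) by (intros n; eapply lt_trans; eauto).
  destruct (omega_bound p) as [b0 Hb0].
  destruct (lub_ex (fun x => exists n, x = p n)) as [s [Hs Hsmin]].
  { exists b0. intros x [n Hn]; subst; auto. }
  assert (Hps : forall n, lt (p n) s).
  { intro n. eapply lt_le_trans. apply Hpp. apply Hs; eauto. }
  assert (Hcof : forall b, lt b s -> exists n, lt b (p n)).
  { intros b Hb. apply NNPP; intro N.
    assert (Hub : forall x, (exists n, x = p n) -> le x b).
    { intros x [n Hn]; subst. apply not_lt_le. intro; apply N; eauto. }
    apply (le_not_lt _ _ (Hsmin b Hub) Hb). }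
  exists s. split; [|split].
  - eapply lt_trans. apply (HnC xi). apply (Hps 0).
  - apply Hc. exists (p 0); split; auto.
    intros b Hb. destruct (Hcof b Hb) as [n Hn]. exists (p n); auto.
  - apply Hc'. exists (q 0); split; auto. eapply lt_trans; eauto.
    intros b Hb. destruct (Hcof b Hb) as [n Hn]. exists (q n); split; auto.
    split. eapply lt_trans; eauto. eapply lt_trans; eauto.
Qed.


Definition m1 := succ m0.
Definition m2 := succ m1.
Lemma m01 : lt m0 m1. Proof. apply succ_gt. Qed.
Lemma m12 : lt m1 m2. Proof. apply succ_gt. Qed.

Definition pair (u v : K) : K := phi m2 (fun b => if dec (b = m0) then u else v).
Lemma pair_inj : forall u v u' v', pair u v = pair u' v' -> u = u' /\ v = v'.
Proof.
  intros u v u' v' H. apply Hphi in H. destruct H as [_ H]. split.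
  - specialize (H m0 (lt_trans _ _ _ m01 m12)). simpl in H.
    destruct (dec (m0 = m0)) as [_|n]; [auto|congruence].
  - specialize (H m1 m12). simpl in H.
    destruct (dec (m1 = m0)) as [E|_]; [|auto].
    exfalso. pose proof m01 as X. rewrite E in X. exact (lt_irr _ X).
Qed.

Definition bk (b : bool) : K := if b then m1 else m0.
Lemma bk_inj : forall b b', bk b = bk b' -> b = b'.
Proof.
  intros [] [] H; auto; simpl in H; exfalso; pose proof m01 as X;
  rewrite H in X; exact (lt_irr _ X).
Qed.

Definition pi (u : K) : K * K :=
  match dec (exists p : K * K, pair (fst p) (snd p) = u) with
  | left H => proj1_sig (cid H)
  | right _ => (u, u)
  end.
Lemma pi_pair : forall v d, pi (pair v d) = (v, d).
Proof.
  intros v d. unfold pi. destruct (dec _) as [H|H].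
  - destruct (cid H) as [[v' d'] Hp]. simpl in *. apply pair_inj in Hp.
    destruct Hp; subst; auto.
  - exfalso; apply H. exists (v, d); auto.
Qed.

Definition nxt (x : K -> K) (d : K) : K :=
  let w := (if dec (d = m0) then snd (pi (x d)) else x d) in
  if dec (lt d w) then w else succ d.
Lemma nxt_gt : forall x d, lt d (nxt x d).
Proof. intros x d. unfold nxt. destruct (dec (lt d _)); auto. apply succ_gt. Qed.
Lemma nxt_loc : forall x x' d, x d = x' d -> nxt x d = nxt x' d.
Proof. intros x x' d H. unfold nxt. rewrite H. reflexivity. Qed.

Inductive inC (x : K -> K) : K -> Prop :=
| inC0 : inC x m0
| inCn : forall d, inC x d -> inC x (nxt x d)
| inCl : forall a, (exists c, inC x c /\ lt c a) ->
    (forall b, lt b a -> exists c, inC x c /\ lt b c /\ lt c a) -> inC x a.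

Lemma inC_loc : forall a x x', (forall b, lt b a -> x b = x' b) -> inC x a -> inC x' a.
Proof.
  refine (well_founded_ind lt_wf _ _).
  intros a IH x x' Hag Hin. inversion Hin; subst.
  - apply inC0.
  - assert (Hd : lt d (nxt x d)) by apply nxt_gt.
    rewrite (nxt_loc x x' d (Hag d Hd)). apply inCn.
    apply (IH d Hd x x'); auto.
    intros b Hb. apply Hag. eapply lt_trans; eauto.
  - apply inCl.
    + destruct H as [c [Hc Hca]]. exists c; split; auto.
      apply (IH c Hca x x'); auto. intros b Hb; apply Hag; eapply lt_trans; eauto.
    + intros b Hb. destruct (H0 b Hb) as [c [Hc [Hbc Hca]]]. exists c; split; auto.
      apply (IH c Hca x x'); auto. intros b' Hb'; apply Hag; eapply lt_trans; eauto.
Qed.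

Lemma gap : forall a x, inC x a -> forall d, inC x d -> lt d a -> lt a (nxt x d) -> False.
Proof.
  refine (well_founded_ind lt_wf _ _).
  intros a IH x Hin d Hd Hda Han.
  inversion Hin as [E | d' Hd' E | a' Hc1 Hc2 E]; subst.
  - exact (m0_min _ Hda).
  - destruct (lt_tri d' d) as [H1|[H1|H1]].
    + apply (IH d Hda x Hd d' Hd' H1 Hda).
    + subst. exact (lt_irr _ Han).
    + apply (IH d' (nxt_gt x d') x Hd' d Hd H1). eapply lt_trans; eauto. apply nxt_gt.
  - destruct (Hc2 d Hda) as [c [Hc [Hdc Hca]]].
    apply (IH c Hca x Hc d Hd Hdc). eapply lt_trans; eauto.
Qed.

Lemma inC_closed : forall x, closedS (inC x).
Proof. intros x a H1 H2. apply inCl; auto. Qed.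

Lemma inC_unb : forall x, unbS (inC x).
Proof.
  intros x xi. apply NNPP; intro Hn.
  assert (Hb : forall g, inC x g -> le g xi).
  { intros g Hg. apply not_lt_le. intro; apply Hn; eauto. }
  destruct (lub_ex (inC x)) as [s [Hs Hsmin]]; [eauto|].
  destruct (classic (inC x s)) as [Hin|Hnot].
  - apply (le_not_lt _ _ (Hs _ (inCn x s Hin)) (nxt_gt x s)).
  - apply Hnot. apply inCl.
    + exists m0; split; [apply inC0|]. destruct (le_m0 s) as [H|H]; auto.
      exfalso; apply Hnot; rewrite <- H; apply inC0.
    + intros b Hbs. apply NNPP; intro N.
      assert (Hub : forall c, inC x c -> le c b).
      { intros c Hc. apply not_lt_le. intro Hbc. apply N. exists c; split; auto.
        split; auto. destruct (Hs c Hc) as [H|H]; auto. subst; contradiction. }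
      apply (le_not_lt _ _ (Hsmin b Hub) Hbs).
Qed.

Definition W (g : K -> bool) (x : K -> K) (a : K) : K -> K :=
  fun b => if dec (lt b a) then pair (bk (g b)) (x b) else m0.

Definition Y (g : K -> bool) (x : K -> K) (a : K) : K :=
  if dec (a = m0) then fst (pi (x m0))
  else if dec (inC x a) then phi a (W g x a) else x a.

Lemma Y_loc : forall g x x' a, (forall b, lt b a -> x b = x' b) -> x a = x' a ->
  Y g x a = Y g x' a.
Proof.
  intros g x x' a Hb Ha. unfold Y.
  destruct (dec (a = m0)) as [E|E]. { subst; rewrite Ha; auto. }
  assert (Hi : inC x a <-> inC x' a).
  { split; apply inC_loc; auto. intros; symmetry; auto. }
  destruct (dec (inC x a)) as [I|I], (dec (inC x' a)) as [I'|I']; try tauto.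
  f_equal. extensionality b. unfold W. destruct (dec (lt b a)); auto. rewrite Hb; auto.
Qed.

Lemma Y_agree : forall g x x' a, (forall b, lt b a -> x b = x' b) ->
  forall b, lt b a -> Y g x b = Y g x' b.
Proof.
  intros g x x' a H b Hb. apply Y_loc; auto. intros c Hc. apply H. eapply lt_trans; eauto.
Qed.

Lemma Y_key : forall g d x x', Y g x = Y d x' -> forall b, g b = d b /\ x b = x' b.
Proof.
  intros g d x x' HY b.
  destruct (club_inter _ _ (inC_closed x) (inC_unb x) (inC_closed x') (inC_unb x') b)
    as [c [Hbc [Hc Hc']]].
  assert (Hc0 : c <> m0).
  { intro E. subst. exact (m0_min _ Hbc). }
  assert (E := f_equal (fun f => f c) HY). simpl in E. unfold Y in E.
  destruct (dec (c = m0)); [contradiction|].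
  destruct (dec (inC x c)); [|contradiction].
  destruct (dec (inC x' c)); [|contradiction].
  apply Hphi in E. destruct E as [_ E]. specialize (E b Hbc). unfold W in E.
  destruct (dec (lt b c)); [|contradiction].
  apply pair_inj in E. destruct E as [E1 E2]. apply bk_inj in E1. auto.
Qed.

Lemma Y_cont : forall g, continuous lt (Y g).
Proof.
  intros g V HV x HVx.
  destruct (HV _ HVx) as [a [t [Hat HatV]]].
  exists a, x. split. { intros y Hy; auto. }
  intros z Hz. apply HatV. intros y Hy. rewrite <- (Hat y Hy).
  apply (Y_agree g z x a); auto.
Qed.


Lemma Y_C : forall g x x' a, a <> m0 -> inC x a -> (forall b, lt b a -> x b = x' b) ->
  Y g x a = Y g x' a.
Proof.
  intros g x x' a Ha Hin Hag. assert (Hin' : inC x' a) by (eapply inC_loc; eauto).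
  unfold Y. destruct (dec (a = m0)); [contradiction|].
  destruct (dec (inC x a)); [|contradiction]. destruct (dec (inC x' a)); [|contradiction].
  f_equal. extensionality b. unfold W. destruct (dec (lt b a)); auto. rewrite Hag; auto.
Qed.

Lemma Y_nC : forall g x a, a <> m0 -> ~ inC x a -> Y g x a = x a.
Proof.
  intros g x a H1 H2. unfold Y. destruct (dec (a = m0)); [contradiction|].
  destruct (dec (inC x a)); [contradiction|auto].
Qed.

Lemma rec_ex : forall (A : Type) (a0 : A) (F0 : (K -> A) -> K -> A),
  exists S : K -> A, forall j, S j = F0 (fun i => if dec (lt i j) then S i else a0) j.
Proof.
  intros A a0 F0.
  pose (F' := fun j (rec : forall i, lt i j -> A) =>
     F0 (fun i => match dec (lt i j) with left h => rec i h | right _ => a0 end) j).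
  exists (Fix lt_wf (fun _ => A) F').
  intro j. rewrite Fix_eq.
  - unfold F'. f_equal.
  - intros j' f g' Hfg. unfold F'. f_equal. extensionality i. destruct (dec (lt i j')); auto.
Qed.

Lemma basic_open_open : forall a t, is_open lt (basic_open lt a t).
Proof. intros a t x Hx. exists a, t. split; auto. Qed.

Lemma ND : forall M, nowhere_dense lt M -> forall c s, exists p : K * (K -> K),
  lt c (fst p) /\ (forall y, lt y c -> snd p y = s y) /\
  (forall w, basic_open lt (fst p) (snd p) w -> ~ M w).
Proof.
  intros M HM c s.
  assert (Hz : exists z, basic_open lt c s z /\ ~ closure lt M z).
  { apply NNPP; intro N. apply (HM (basic_open lt c s) (basic_open_open c s)) with (z := s).
    - intros z Hz. apply NNPP; intro; apply N; eauto.
    - intros y Hy; auto. }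
  destruct Hz as [z [Hzc Hzn]].
  assert (HU : exists U, is_open lt U /\ U z /\ forall w, U w -> ~ M w).
  { apply NNPP; intro N. apply Hzn. intros U HU HUz. apply NNPP; intro N2.
    apply N. exists U; repeat split; auto. intros w Hw HMw. apply N2; eauto. }
  destruct HU as [U [HUo [HUz HUM]]].
  destruct (HUo z HUz) as [a' [t' [Hz' Hsub]]].
  pose (b := if dec (lt c a') then a' else succ c).
  assert (Hcb : lt c b) by (unfold b; destruct (dec (lt c a')); auto; apply succ_gt).
  assert (Hab : le a' b).
  { unfold b; destruct (dec (lt c a')) as [H|H]; [right; auto|].
    left. apply le_lt_trans with c; [apply not_lt_le; auto | apply succ_gt]. }
  exists (b, z). simpl. split; auto. split; auto.
  intros w Hw. apply HUM. apply Hsub. intros y Hy.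
  rewrite (Hw y (lt_le_trans _ _ _ Hy Hab)). apply Hz'; auto.
Qed.

Lemma lbnd : forall (h : K -> K) j, exists b, forall x, (exists i, lt i j /\ x = h i) -> le x b.
Proof.
  intros h j. destruct (reg j h) as [b Hb]. exists b. intros x [i [Hi E]]; subst; auto.
Qed.

Definition lubK (h : K -> K) (j : K) : K := proj1_sig (cid (lub_ex _ (lbnd h j))).
Lemma lubK_ub : forall h j i, lt i j -> le (h i) (lubK h j).
Proof. intros h j i Hi. apply (proj1 (proj2_sig (cid (lub_ex _ (lbnd h j))))). eauto. Qed.
Lemma lubK_min : forall h j b, (forall i, lt i j -> le (h i) b) -> le (lubK h j) b.
Proof.
  intros h j b Hb. apply (proj2 (proj2_sig (cid (lub_ex _ (lbnd h j))))).
  intros x [i [Hi E]]; subst; auto.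
Qed.

Lemma construct : forall (g : K -> bool) (a : K) (t : K -> K) (N : K -> (K -> K) -> Prop),
  (forall j, nowhere_dense lt (N j)) ->
  exists x, basic_open lt a t (Y g x) /\ forall j, ~ N j (Y g x).
Proof.
  intros g a t N HN.
  pose (ndc := fun j c s => proj1_sig (cid (ND (N j) (HN j) c s))).
  assert (Hndc : forall j c s, lt c (fst (ndc j c s)) /\
     (forall y, lt y c -> snd (ndc j c s) y = s y) /\
     (forall w, basic_open lt (fst (ndc j c s)) (snd (ndc j c s)) w -> ~ N j w)).
  { intros j c s. exact (proj2_sig (cid (ND (N j) (HN j) c s))). }
  pose (d0 := if dec (lt m0 a) then a else succ m0).
  assert (Hd0 : lt m0 d0) by (unfold d0; destruct (dec (lt m0 a)); auto; apply succ_gt).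
  assert (Had0 : le a d0).
  { unfold d0; destruct (dec (lt m0 a)) as [H|H]; [right; auto|].
    destruct (le_m0 a) as [H1|H1]; [contradiction|]. subst. left; apply succ_gt. }
  pose (X0 := fun y => if dec (y = m0) then pair (t m0) d0 else t y).
  pose (stepf := fun (st : K * (K -> K)) i =>
     let p := ndc i (succ (fst st)) (Y g (snd st)) in
     (fst p, fun y => if dec (lt y (fst st)) then snd st y
                      else if dec (y = fst st) then fst p else snd p y)).
  pose (limf := fun (f : K -> K * (K -> K)) j =>
     (lubK (fun i => fst (f i)) j,
      fun y => match dec (exists i, lt i j /\ lt y (fst (f i))) with
               | left H => snd (f (proj1_sig (cid H))) y
               | right _ => m0 end)).
  pose (F0 := fun (f : K -> K * (K -> K)) j =>
     if dec (j = m0) then (d0, X0) else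
     match dec (exists i, lt i j /\ forall i', lt i' j -> le i' i) with
     | left H => stepf (f (proj1_sig (cid H))) (proj1_sig (cid H))
     | right _ => limf f j end).
  destruct (rec_ex _ (m0, fun _ => m0) F0) as [S HS].
  pose (dl := fun j => fst (S j)). pose (X := fun j => snd (S j)).
  assert (Inv : forall j,
    lt m0 (dl j) /\ inC (X j) (dl j) /\
    (forall x', (forall y, lt y (dl j) -> x' y = X j y) ->
        basic_open lt a t (Y g x') /\ forall i, lt i j -> ~ N i (Y g x')) /\
    (forall i, lt i j -> lt (dl i) (dl j) /\ forall y, lt y (dl i) -> X i y = X j y)).
  { refine (well_founded_ind lt_wf _ _). intros j IH.
    pose proof (HS j) as HSj.
    set (f := fun i => if dec (lt i j) then S i else (m0, fun _ => m0)) in HSj.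
    assert (Hf : forall i, lt i j -> f i = S i).
    { intros i Hi. unfold f. destruct (dec (lt i j)); [auto|contradiction]. }
    unfold F0 in HSj. destruct (dec (j = m0)) as [Ej|Ej].
    -
      assert (Edl : dl j = d0) by (unfold dl; rewrite HSj; auto).
      assert (EX : X j = X0) by (unfold X; rewrite HSj; auto).
      rewrite Edl, EX.
      assert (HX0 : X0 m0 = pair (t m0) d0).
      { unfold X0. destruct (dec (m0 = m0)) as [_|n]; [auto|congruence]. }
      assert (Hn0 : nxt X0 m0 = d0).
      { unfold nxt. destruct (dec (m0 = m0)) as [_|n]; [|congruence].
        rewrite HX0, pi_pair. simpl. destruct (dec (lt m0 d0)); [auto|contradiction]. }
      split; [auto|]. split.
      { rewrite <- Hn0. apply inCn. apply inC0. }
      split.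
      + intros x' Hx'. split.
        * intros y Hy. assert (Hyd : lt y d0) by (eapply lt_le_trans; eauto).
          destruct (dec (y = m0)) as [Ey|Ey].
          -- subst y. unfold Y. destruct (dec (m0 = m0)) as [_|n]; [|congruence].
             rewrite (Hx' m0 Hd0), HX0, pi_pair. auto.
          -- rewrite Y_nC; auto.
             ++ rewrite (Hx' y Hyd). unfold X0. destruct (dec (y = m0)); [contradiction|auto].
             ++ intro Hin. apply (gap y x' Hin m0 (inC0 x')).
                ** destruct (le_m0 y) as [H|H]; [auto|congruence].
                ** rewrite (nxt_loc x' X0 m0 (Hx' m0 Hd0)), Hn0. auto.
        * intros i Hi. subst j. exfalso; exact (m0_min _ Hi).
      + intros i Hi. subst j. exfalso; exact (m0_min _ Hi).
    - destruct (dec (exists i, lt i j /\ forall i', lt i' j -> le i' i)) as [H|H].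
      +
        destruct (cid H) as [i [Hi Himax]] eqn:Ecid. simpl in HSj.
        rewrite (Hf i Hi) in HSj.
        destruct (IH i Hi) as [I1 [I2 [I3 I4]]].
        pose (p := ndc i (succ (dl i)) (Y g (X i))).
        destruct (Hndc i (succ (dl i)) (Y g (X i))) as [P1 [P2 P3]].
        fold p in P1, P2, P3.
        assert (Edl : dl j = fst p) by (unfold dl; rewrite HSj; auto).
        assert (EX : X j = fun y => if dec (lt y (dl i)) then X i y
                      else if dec (y = dl i) then fst p else snd p y)
          by (unfold X; rewrite HSj; auto).
        assert (Hdlp : lt (dl i) (fst p)) by (eapply lt_trans; [apply succ_gt| exact P1]).
        assert (Hag : forall y, lt y (dl i) -> X j y = X i y).
        { intros y Hy. rewrite EX. destruct (dec (lt y (dl i))); [auto|contradiction]. }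
        assert (Hat : X j (dl i) = fst p).
        { rewrite EX. destruct (dec (lt (dl i) (dl i))) as [Hc|_]; [exfalso; exact (lt_irr _ Hc)|].
          destruct (dec (dl i = dl i)); [auto|congruence]. }
        assert (Hne : dl i <> m0) by (intro E; rewrite E in I1; exact (lt_irr _ I1)).
        assert (Hnx : forall x', x' (dl i) = fst p -> nxt x' (dl i) = fst p).
        { intros x' Hx'. unfold nxt. destruct (dec (dl i = m0)); [contradiction|].
          rewrite Hx'. destruct (dec (lt (dl i) (fst p))); [auto|contradiction]. }
        rewrite Edl. split; [eapply lt_trans; eauto|]. split.
        { rewrite <- (Hnx (X j) Hat). apply inCn. eapply inC_loc; [|exact I2].
          intros y Hy; symmetry; apply Hag; auto. }
        split.
        * intros x' Hx'.
          assert (Hx'i : forall y, lt y (dl i) -> x' y = X i y).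
          { intros y Hy. rewrite Hx'. apply Hag; auto. eapply lt_trans; eauto. }
          destruct (I3 x' Hx'i) as [J1 J2]. split; auto.
          assert (HinC : inC x' (dl i)).
          { eapply inC_loc; [|exact I2]. intros y Hy; symmetry; auto. }
          assert (HNi : ~ N i (Y g x')).
          { apply P3. intros y Hy.
            destruct (lt_tri y (dl i)) as [Hy1|[Hy1|Hy1]].
            - rewrite (Y_agree g x' (X i) (dl i) Hx'i y Hy1). symmetry; apply P2.
              eapply lt_trans; [exact Hy1|apply succ_gt].
            - subst y. rewrite (Y_C g x' (X i) (dl i) Hne HinC Hx'i). symmetry; apply P2. apply succ_gt.
            - assert (Hym : y <> m0).
              { intro E; subst. exact (m0_min _ Hy1). }
              rewrite Y_nC; auto.
              + rewrite (Hx' y Hy). rewrite EX.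
                destruct (dec (lt y (dl i))) as [Hc|_]; [exfalso; exact (lt_asym _ _ Hc Hy1)|].
                destruct (dec (y = dl i)) as [Hc|_]; [subst; exfalso; exact (lt_irr _ Hy1)|auto].
              + intro Hin. apply (gap y x' Hin (dl i) HinC Hy1).
                rewrite Hnx; auto. rewrite (Hx' (dl i) Hdlp). auto. }
          intros i' Hi'. destruct (Himax i' Hi') as [Hc|Hc]; [apply J2; auto|subst; auto].
        * intros i' Hi'. destruct (Himax i' Hi') as [Hc|Hc].
          -- destruct (I4 i' Hc) as [K1 K2]. split; [eapply lt_trans; eauto|].
             intros y Hy. rewrite K2; auto. symmetry; apply Hag. eapply lt_trans; eauto.
          -- subst i'. split; auto. intros y Hy; symmetry; apply Hag; auto.
      +
        assert (Edl : dl j = lubK (fun i => fst (f i)) j) by (unfold dl; rewrite HSj; auto).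
        assert (Hjm : lt m0 j) by (destruct (le_m0 j) as [H1|H1]; [auto|congruence]).
        assert (Hnm : forall i, lt i j -> exists i', lt i i' /\ lt i' j).
        { intros i Hi. apply NNPP; intro N1. apply H. exists i; split; auto.
          intros i' Hi'. apply not_lt_le. intro Hc. apply N1; eauto. }
        assert (Hub : forall i, lt i j -> le (dl i) (dl j)).
        { intros i Hi. rewrite Edl. unfold dl at 1. rewrite <- (Hf i Hi).
          apply (lubK_ub (fun i => fst (f i))); auto. }
        assert (Hcoh : forall i i', lt i j -> lt i' j -> le i i' ->
                   forall y, lt y (dl i) -> X i y = X i' y).
        { intros i i' Hi Hi' [Hc|Hc] y Hy; [|subst; auto].
          apply (proj2 (proj2 (proj2 (IH i' Hi'))) i Hc); auto. }
        assert (Hstr : forall i, lt i j -> lt (dl i) (dl j)).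
        { intros i Hi. destruct (Hnm i Hi) as [i' [H1 H2]].
          eapply lt_le_trans; [|apply (Hub i' H2)].
          apply (proj2 (proj2 (proj2 (IH i' H2))) i H1). }
        assert (Xlim : forall i y, lt i j -> lt y (dl i) -> X j y = X i y).
        { intros i y Hi Hy. unfold X at 1. rewrite HSj. unfold limf. simpl.
          destruct (dec (exists i0, lt i0 j /\ lt y (fst (f i0)))) as [H2|H2].
          - destruct (cid H2) as [i0 [Hi0 Hy0]]. simpl. rewrite (Hf i0 Hi0) in *.
            fold (X i0). destruct (lt_tri i0 i) as [Hc|[Hc|Hc]].
            + apply Hcoh; auto. left; auto.
            + subst; auto.
            + symmetry; apply Hcoh; auto. left; auto.
          - exfalso; apply H2. exists i; split; auto. rewrite Hf; auto. }
        assert (Hcof : forall b, lt b (dl j) -> exists i, lt i j /\ lt b (dl i)).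
        { intros b Hb. apply NNPP; intro N1.
          assert (le (dl j) b).
          { rewrite Edl. apply lubK_min. intros i Hi. rewrite Hf; auto.
            apply not_lt_le. intro Hc. apply N1; eauto. }
          exact (le_not_lt _ _ H0 Hb). }
        assert (HCi : forall i, lt i j -> inC (X j) (dl i)).
        { intros i Hi. eapply inC_loc; [|exact (proj1 (proj2 (IH i Hi)))].
          intros y Hy; symmetry; apply Xlim; auto. }
        split; [eapply lt_trans; [apply (proj1 (IH m0 Hjm))|apply Hstr; auto]|].
        split.
        { apply inCl.
          - exists (dl m0); split; auto.
          - intros b Hb. destruct (Hcof b Hb) as [i [Hi Hbi]]. exists (dl i); auto. }
        split.
        * intros x' Hx'. split.
          -- assert (A1 : forall y, lt y (dl m0) -> x' y = X m0 y).
             { intros y Hy. rewrite Hx'. apply Xlim; auto. eapply lt_trans; eauto. }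
             apply (proj1 (proj1 (proj2 (proj2 (IH m0 Hjm))) x' A1)).
          -- intros i' Hi'. destruct (Hnm i' Hi') as [i'' [H1 H2]].
             assert (A1 : forall y, lt y (dl i'') -> x' y = X i'' y).
             { intros y Hy. rewrite Hx'. apply Xlim; auto. eapply lt_trans; eauto. }
             apply (proj2 (proj1 (proj2 (proj2 (IH i'' H2))) x' A1)); auto.
        * intros i Hi. split; auto. intros y Hy. symmetry; apply Xlim; auto. }
  assert (Hgrow : forall j, ~ lt (dl j) j).
  { refine (well_founded_ind lt_wf _ _). intros j IH Hc.
    apply (IH (dl j) Hc).
    apply (proj1 (proj2 (proj2 (proj2 (Inv j))) (dl j) Hc)). }
  assert (Hex : forall y, exists j, lt y (dl j)).
  { intro y. exists (succ y). eapply lt_le_trans; [apply succ_gt|].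
    apply not_lt_le. apply Hgrow. }
  pose (x := fun y => X (proj1_sig (cid (Hex y))) y).
  assert (Hx : forall j y, lt y (dl j) -> x y = X j y).
  { intros j y Hy. unfold x. destruct (cid (Hex y)) as [j0 Hj0]. simpl.
    destruct (lt_tri j0 j) as [Hc|[Hc|Hc]].
    - apply (proj2 (proj2 (proj2 (proj2 (Inv j))) j0 Hc)); auto.
    - subst; auto.
    - symmetry. apply (proj2 (proj2 (proj2 (proj2 (Inv j0))) j Hc)); auto. }
  exists x. split.
  - apply (proj1 (proj1 (proj2 (proj2 (Inv m0))) x (Hx m0))).
  - intros i. apply (proj2 (proj1 (proj2 (proj2 (Inv (succ i)))) x (Hx (succ i))) i).
    apply succ_gt.
Qed.


Lemma main_sec :
  exists A : (K -> bool) -> set (K -> K),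
    (forall g d, g <> d -> forall x, A g x -> ~ A d x) /\
    (forall g, exists f : (K -> K) -> (K -> K),
        continuous lt f /\ (forall x y, f x = f y -> x = y) /\
        (forall y, A g y <-> exists x, f x = y)) /\
    (forall g d, g <> d ->
        ~ exists X : set (K -> K), kappa_Baire lt X /\
            (forall x, A g x -> X x) /\ (forall x, X x -> ~ A d x)).
Proof.
  exists (fun g y => exists x, Y g x = y). split; [|split].
  - intros g d Hgd y [x Hx] [x' Hx']. apply Hgd. extensionality b.
    apply (Y_key g d x x'). congruence.
  - intro g. exists (Y g). split; [apply Y_cont|split].
    + intros x y H. extensionality b. apply (Y_key g g x y H b).
    + intro y; tauto.
  - intros g d Hgd [X0 [[U [Nn [HU [HN Hsd]]]] [Hsub Hdis]]].
    destruct (classic (exists u, U u)) as [[u Hu]|HU0].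
    + destruct (HU u Hu) as [a [t [Hat Hsub2]]].
      destruct (construct d a t Nn HN) as [x [Hx1 Hx2]].
      destruct (Hsd (Y d x)) as [j Hj].
      * right. split; [apply Hsub2; auto|]. intro HX. apply (Hdis _ HX). eauto.
      * exact (Hx2 j Hj).
    + destruct (construct g m0 (fun _ => m0) Nn HN) as [x [Hx1 Hx2]].
      destruct (Hsd (Y g x)) as [j Hj].
      * left. split; [apply Hsub; eauto|]. intro HUy; apply HU0; eauto.
      * exact (Hx2 j Hj).
Qed.

End Main.

Theorem theorem1p8 (K : Type) (lt : K -> K -> Prop)
  (Hwo : strict_well_order lt) (Hcard : is_cardinal_order lt)
  (Hunc : uncountable K) (Hkk : kappa_lt_kappa_le_kappa lt) :
  exists A : (K -> bool) -> set (K -> K),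
    (forall g d, g <> d -> forall x, A g x -> ~ A d x) /\
    (forall g, exists f : (K -> K) -> (K -> K),
        continuous lt f /\ (forall x y, f x = f y -> x = y) /\
        (forall y, A g y <-> exists x, f x = y)) /\
    (forall g d, g <> d ->
        ~ exists X : set (K -> K), kappa_Baire lt X /\
            (forall x, A g x -> X x) /\ (forall x, X x -> ~ A d x)).
Proof.
  destruct Hkk as [phi Hphi].
  exact (main_sec K lt Hwo Hcard Hunc phi Hphi).
Qed.
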